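(* Let $F(V)$ be the set of formulas of $\mathrm{q}\L^{*}$ and let $\sim$ be the relation on $F(V)$ given by $p\sim q$ iff $\vdash p\leftrightarrow q$. Then $[\mathbf{F}(\mathbf{V})]_\sim=\langle [F(V)]_\sim;\to,\neg,{}^{+},{}^{-},[1]_\sim\rangle$, with $\neg[p]_\sim=[\neg p]_\sim$, $[p]_\sim\to[q]_\sim=[p\to q]_\sim$, $([p]_\sim)^{+}=[p^{+}]_\sim$, $([p]_\sim)^{-}=[p^{-}]_\sim$, is a quasi-Wajsberg* algebra.
   Context: Let $V=\{p_1,p_2,\ldots\}$ be a set of propositional variables and $F(V)$ the set of formulas built from $V$ and the constant $1$ with the binary connective $\to$ and the unary connectives $\neg$, ${}^{+}$, ${}^{-}$ (postfix ${}^+,{}^-$ bind tighter than $\neg$, which binds tighter than $\to$). Abbreviations: $p\vee q:=((p^{+}\to q^{+})^{+}\to(\neg p)^{-})\to((q^{-}\to p^{-})^{-}\to p^{-})$; $A\leftrightarrow B$ as an axiom stands for the two axioms $A\to B$ and $B\to A$, and $\vdash A\leftrightarrow B$ means $\vdash A\to B$ and $\vdash B\to A$. Axiom schemas of $\mathrm{q}\L^{*}$ (for all formulas $p,q,r$): (Q1) $(p\to q)\leftrightarrow(\neg q\to\neg p)$; (Q2) $1\leftrightarrow((1\to p)\to 1)$; (Q3) $p\leftrightarrow((q\to q)\to p)$; (Q4) $(p\to q)\leftrightarrow((q^{+}\to p^{-})\to(p^{+}\to q^{-}))$; (Q5) $\neg(p\to q)\leftrightarrow(q\to p)$; (Q6)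 $(p\to(\neg p\to q))^{+}\leftrightarrow(p^{+}\to(\neg p^{+}\to q^{+}))$; (Q7) $(p\to(q\vee r))\leftrightarrow((p\to r)\vee(p\to q))$; (Q8) $(p\vee(q\vee r))\leftrightarrow((p\vee q)\vee r)$; (Q9) $((p\to 1)\to((q\to 1)\to r))\to((q\to 1)\to((p\to 1)\to r))$; (Q10) $p\to 1$; (Q11) $((1\to 1)\to p^{+})\leftrightarrow((p\to 1)\to 1)$ and $((1\to 1)\to p^{-})\leftrightarrow((p\to\neg 1)\to\neg 1)$. Deduction rules: (R1) from $p$ and $p\to q$ infer $(r\to r)\to q$; (R2) from $(r\to r)\to(p\to q)$ infer $p\to q$; (R3) from $p\to q$ and $r\to t$ infer $(q\to r)\to(p\to t)$. $\vdash q$ means $q$ has a proof (finite sequence of axioms and rule applications ending in $q$). The relation $\sim$ is a congruence for $\to,\neg,{}^+,{}^-$, so the operations on classes $[p]_\sim$ are well defined. A quasi-Wajsberg* algebra is an algebra $\langle W;\to,\neg,{}^{+},{}^{-},1\rangle$ of type $\langle2,1,1,1,0\rangle$ such that for all $x,y,z\in W$: (QW*1) $x\to y=\neg y\to\neg x$; (QW*2) $(x\to 1)\to((y\to 1)\to z)=(y\to 1)\to((x\to 1)\to z)$; (QW*3) $(1\to x)\to 1=1$; (QW*4) $(z\to z)\to(x\to y)=x\to y$; (QW*5) $(1\to 1)\to x^{+}=((1\to 1)\to x)^{+}=(x\to 1)\to 1$ and $(1\to 1)\to x^{-}=((1\to 1)\to x)^{-}=(x\to\neg 1)\to\neg 1$;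 (QW*6) $x\to y=(y^{+}\to x^{-})\to(x^{+}\to y^{-})$; (QW*7) $\neg(x\to y)=y\to x$; (QW*8) $\neg\neg x=x$; (QW*9) $(x\to(\neg x\to y))^{+}=x^{+}\to(\neg x^{+}\to y^{+})$; (QW*10) $x\vee y=y\vee x$; (QW*11) $x\vee(y\vee z)=(x\vee y)\vee z$; (QW*12) $x\to(y\vee z)=(x\to y)\vee(x\to z)$; where $x\vee y:=((x^{+}\to y^{+})^{+}\to(\neg x)^{-})\to((y^{-}\to x^{-})^{-}\to x^{-})$. *)

(* Defs.v *)
From Stdlib Require Import ClassicalEpsilon.

Inductive formula : Type :=
| Var : nat -> formula
| One : formula
| Imp : formula -> formula -> formula
| Neg : formula -> formula
| Plus : formula -> formula
| Minus : formula -> formula.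

Definition fvee (p q : formula) : formula :=
  Imp (Imp (Plus (Imp (Plus p) (Plus q))) (Minus (Neg p)))
      (Imp (Minus (Imp (Minus q) (Minus p))) (Minus p)).

(* Axiom schemas of qL*; an axiom A <-> B stands for A -> B and B -> A. *)
Inductive is_axiom : formula -> Prop :=
| Q1a p q : is_axiom (Imp (Imp p q) (Imp (Neg q) (Neg p)))
| Q1b p q : is_axiom (Imp (Imp (Neg q) (Neg p)) (Imp p q))
| Q2a p : is_axiom (Imp One (Imp (Imp One p) One))
| Q2b p : is_axiom (Imp (Imp (Imp One p) One) One)
| Q3a p q : is_axiom (Imp p (Imp (Imp q q) p))
| Q3b p q : is_axiom (Imp (Imp (Imp q q) p) p)
| Q4a p q : is_axiom (Imp (Imp p q)
                          (Imp (Imp (Plus q) (Minus p)) (Imp (Plus p) (Minus q))))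
| Q4b p q : is_axiom (Imp (Imp (Imp (Plus q) (Minus p)) (Imp (Plus p) (Minus q)))
                          (Imp p q))
| Q5a p q : is_axiom (Imp (Neg (Imp p q)) (Imp q p))
| Q5b p q : is_axiom (Imp (Imp q p) (Neg (Imp p q)))
| Q6a p q : is_axiom (Imp (Plus (Imp p (Imp (Neg p) q)))
                          (Imp (Plus p) (Imp (Neg (Plus p)) (Plus q))))
| Q6b p q : is_axiom (Imp (Imp (Plus p) (Imp (Neg (Plus p)) (Plus q)))
                          (Plus (Imp p (Imp (Neg p) q))))
| Q7a p q r : is_axiom (Imp (Imp p (fvee q r)) (fvee (Imp p r) (Imp p q)))
| Q7b p q r : is_axiom (Imp (fvee (Imp p r) (Imp p q)) (Imp p (fvee q r)))
| Q8a p q r : is_axiom (Imp (fvee p (fvee q r)) (fvee (fvee p q) r))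
| Q8b p q r : is_axiom (Imp (fvee (fvee p q) r) (fvee p (fvee q r)))
| Q9 p q r : is_axiom (Imp (Imp (Imp p One) (Imp (Imp q One) r))
                           (Imp (Imp q One) (Imp (Imp p One) r)))
| Q10 p : is_axiom (Imp p One)
| Q11a p : is_axiom (Imp (Imp (Imp One One) (Plus p)) (Imp (Imp p One) One))
| Q11b p : is_axiom (Imp (Imp (Imp p One) One) (Imp (Imp One One) (Plus p)))
| Q11c p : is_axiom (Imp (Imp (Imp One One) (Minus p))
                         (Imp (Imp p (Neg One)) (Neg One)))
| Q11d p : is_axiom (Imp (Imp (Imp p (Neg One)) (Neg One))
                         (Imp (Imp One One) (Minus p))).

Inductive prov : formula -> Prop :=
| prov_ax p : is_axiom p -> prov p
| prov_R1 p q r : prov p -> prov (Imp p q) -> prov (Imp (Imp r r) q)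
| prov_R2 p q r : prov (Imp (Imp r r) (Imp p q)) -> prov (Imp p q)
| prov_R3 p q r t : prov (Imp p q) -> prov (Imp r t) ->
                    prov (Imp (Imp q r) (Imp p t)).

Definition fequiv (p q : formula) : Prop := prov (Imp p q) /\ prov (Imp q p).

Record fclass : Type := FClass {
  fc_set : formula -> Prop;
  fc_is_class : exists p, fc_set = fun q => fequiv p q
}.

Definition cls (p : formula) : fclass :=
  @FClass (fun q => fequiv p q) (ex_intro _ p eq_refl).

Definition repr (a : fclass) : formula :=
  proj1_sig (constructive_indefinite_description _ (fc_is_class a)).

Definition c_imp (a b : fclass) : fclass := cls (Imp (repr a) (repr b)).
Definition c_neg (a : fclass) : fclass := cls (Neg (repr a)).
Definition c_plus (a : fclass) : fclass := cls (Plus (repr a)).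
Definition c_minus (a : fclass) : fclass := cls (Minus (repr a)).
Definition c_one : fclass := cls One.

Section QW.
Variables (W : Type) (imp : W -> W -> W) (neg plus minus : W -> W) (one : W).

Definition wvee (x y : W) : W :=
  imp (imp (plus (imp (plus x) (plus y))) (minus (neg x)))
      (imp (minus (imp (minus y) (minus x))) (minus x)).

Definition is_qWstar : Prop :=
  (forall x y, imp x y = imp (neg y) (neg x)) /\
  (forall x y z, imp (imp x one) (imp (imp y one) z)
                 = imp (imp y one) (imp (imp x one) z)) /\
  (forall x, imp (imp one x) one = one) /\
  (forall x y z, imp (imp z z) (imp x y) = imp x y) /\
  (forall x, imp (imp one one) (plus x) = plus (imp (imp one one) x) /\
             plus (imp (imp one one) x) = imp (imp x one) one) /\
  (forall x, imp (imp one one) (minus x) = minus (imp (imp one one) x) /\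
             minus (imp (imp one one) x) = imp (imp x (neg one)) (neg one)) /\
  (forall x y, imp x y = imp (imp (plus y) (minus x)) (imp (plus x) (minus y))) /\
  (forall x y, neg (imp x y) = imp y x) /\
  (forall x, neg (neg x) = x) /\
  (forall x y, plus (imp x (imp (neg x) y))
               = imp (plus x) (imp (neg (plus x)) (plus y))) /\
  (forall x y, wvee x y = wvee y x) /\
  (forall x y z, wvee x (wvee y z) = wvee (wvee x y) z) /\
  (forall x y z, imp x (wvee y z) = wvee (imp x y) (imp x z)).
End QW.

(* Main.v *)
Require Import Defs.
From Stdlib Require Import ClassicalEpsilon FunctionalExtensionality PropExtensionality ProofIrrelevance.

Lemma MP A X Y : prov A -> prov (Imp A (Imp X Y)) -> prov (Imp X Y).
Proof. intros h1 h2. apply (prov_R2 _ _ One). exact (prov_R1 _ _ _ h1 h2). Qed.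

Lemma trans p q r : prov (Imp p q) -> prov (Imp q r) -> prov (Imp p r).
Proof. intros h1 h2. apply (prov_R2 _ _ q). apply prov_R3; auto. Qed.

Lemma refl p : prov (Imp p p).
Proof. eapply trans; [apply prov_ax, (Q3a p One) | apply prov_ax, Q3b]. Qed.

Lemma fe_refl p : fequiv p p.
Proof. split; apply refl. Qed.
Lemma fe_sym p q : fequiv p q -> fequiv q p.
Proof. intros [a b]; split; auto. Qed.
Lemma fe_trans p q r : fequiv p q -> fequiv q r -> fequiv p r.
Proof. intros [a b] [c d]; split; eapply trans; eauto. Qed.

Lemma fe_ax p q : is_axiom (Imp p q) -> is_axiom (Imp q p) -> fequiv p q.
Proof. split; apply prov_ax; auto. Qed.

Lemma fe_imp p p' q q' : fequiv p p' -> fequiv q q' -> fequiv (Imp p q) (Imp p' q').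
Proof. intros [a b] [c d]; split; apply prov_R3; auto. Qed.

Lemma fe_neg p q : fequiv p q -> fequiv (Neg p) (Neg q).
Proof. intros [a b]; split; [exact (MP _ _ _ b (prov_ax _ (Q1a _ _))) | exact (MP _ _ _ a (prov_ax _ (Q1a _ _)))]. Qed.

Lemma fe_Q3 p : fequiv p (Imp (Imp One One) p).
Proof. apply fe_ax; constructor. Qed.

Lemma fe_plus p q : fequiv p q -> fequiv (Plus p) (Plus q).
Proof.
  intros h.
  eapply fe_trans; [apply fe_Q3|].
  eapply fe_trans; [exact (fe_ax _ _ (Q11a _) (Q11b _))|].
  eapply fe_trans; [apply fe_imp; [apply fe_imp; [exact h| apply fe_refl] | apply fe_refl]|].
  eapply fe_trans; [exact (fe_ax _ _ (Q11b _) (Q11a _))|].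
  apply fe_sym, fe_Q3.
Qed.

Lemma fe_minus p q : fequiv p q -> fequiv (Minus p) (Minus q).
Proof.
  intros h.
  eapply fe_trans; [apply fe_Q3|].
  eapply fe_trans; [exact (fe_ax _ _ (Q11c _) (Q11d _))|].
  eapply fe_trans; [apply fe_imp; [apply fe_imp; [exact h| apply fe_refl] | apply fe_refl]|].
  eapply fe_trans; [exact (fe_ax _ _ (Q11d _) (Q11c _))|].
  apply fe_sym, fe_Q3.
Qed.

Lemma fe_vee p p' q q' : fequiv p p' -> fequiv q q' -> fequiv (fvee p q) (fvee p' q').
Proof.
  intros h k. unfold fvee.
  repeat first [apply fe_imp | apply fe_plus | apply fe_minus | apply fe_neg | assumption].
Qed.

Lemma fe_negneg p : fequiv (Neg (Neg p)) p.
Proof.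
  eapply fe_trans; [apply fe_neg, fe_neg, (fe_Q3 p)|].
  eapply fe_trans; [apply fe_neg; exact (fe_ax _ _ (Q5a _ _) (Q5b _ _))|].
  eapply fe_trans; [exact (fe_ax _ _ (Q5a _ _) (Q5b _ _))|].
  apply fe_sym, fe_Q3.
Qed.

Lemma fe_veeC p q : fequiv (fvee p q) (fvee q p).
Proof.
  eapply fe_trans; [apply fe_Q3|].
  eapply fe_trans; [apply fe_ax; [apply Q7a|apply Q7b]|].
  apply fe_vee; apply fe_sym, fe_Q3.
Qed.

Lemma fclass_ext s1 s2 h1 h2 : s1 = s2 -> @FClass s1 h1 = @FClass s2 h2.
Proof. intros ->. f_equal. apply proof_irrelevance. Qed.

Lemma cls_eq p q : fequiv p q -> cls p = cls q.
Proof.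
  intros h. unfold cls. apply fclass_ext.
  apply functional_extensionality; intro r.
  apply propositional_extensionality; split; intro k.
  - eapply fe_trans; [apply fe_sym, h|exact k].
  - eapply fe_trans; [exact h|exact k].
Qed.

Lemma cls_inj p q : cls p = cls q -> fequiv p q.
Proof.
  intros e. apply (f_equal fc_set) in e. simpl in e.
  assert (H : fequiv q p) by (change ((fun r => fequiv q r) p); rewrite <- e; apply fe_refl).
  apply fe_sym, H.
Qed.

Lemma repr_spec a : a = cls (repr a).
Proof.
  destruct a as [s h]. unfold repr. simpl.
  destruct (constructive_indefinite_description _ h) as [p e]. simpl.
  unfold cls. apply fclass_ext. exact e.
Qed.

Lemma repr_cls p : fequiv (repr (cls p)) p.
Proof. apply cls_inj. symmetry. apply repr_spec. Qed.

Lemma surj a : exists p, a = cls p.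
Proof. exists (repr a). apply repr_spec. Qed.

Lemma h_imp p q : c_imp (cls p) (cls q) = cls (Imp p q).
Proof. apply cls_eq, fe_imp; apply repr_cls. Qed.
Lemma h_neg p : c_neg (cls p) = cls (Neg p).
Proof. apply cls_eq, fe_neg; apply repr_cls. Qed.
Lemma h_plus p : c_plus (cls p) = cls (Plus p).
Proof. apply cls_eq, fe_plus; apply repr_cls. Qed.
Lemma h_minus p : c_minus (cls p) = cls (Minus p).
Proof. apply cls_eq, fe_minus; apply repr_cls. Qed.

Ltac norm := unfold wvee, c_one in *; repeat rewrite ?h_imp, ?h_neg, ?h_plus, ?h_minus.

Theorem proposition5p3 :
  (forall p q, c_imp (cls p) (cls q) = cls (Imp p q)) /\
  (forall p, c_neg (cls p) = cls (Neg p)) /\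
  (forall p, c_plus (cls p) = cls (Plus p)) /\
  (forall p, c_minus (cls p) = cls (Minus p)) /\
  @is_qWstar fclass c_imp c_neg c_plus c_minus c_one.
Proof.
  split; [exact h_imp|]. split; [exact h_neg|].
  split; [exact h_plus|]. split; [exact h_minus|].
  unfold is_qWstar.
  repeat split; intros;
  repeat match goal with a : fclass |- _ => destruct (surj a) as [? ->]; clear a end;
  norm; apply cls_eq.
  - apply fe_ax; constructor.
  - apply fe_ax; constructor.
  - apply fe_ax; constructor.
  - apply fe_ax; constructor.
  - eapply fe_trans; [apply fe_sym, fe_Q3|]. apply fe_plus, fe_Q3.
  - eapply fe_trans; [apply fe_plus, fe_sym, fe_Q3|].
    eapply fe_trans; [apply fe_Q3|]. apply fe_ax; constructor.
  - eapply fe_trans; [apply fe_sym, fe_Q3|]. apply fe_minus, fe_Q3.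
  - eapply fe_trans; [apply fe_minus, fe_sym, fe_Q3|].
    eapply fe_trans; [apply fe_Q3|]. apply fe_ax; constructor.
  - apply fe_ax; constructor.
  - apply fe_ax; constructor.
  - apply fe_negneg.
  - apply fe_ax; constructor.
  - exact (fe_veeC _ _).
  - exact (fe_ax _ _ (Q8a _ _ _) (Q8b _ _ _)).
  - eapply fe_trans; [exact (fe_ax _ _ (Q7a _ _ _) (Q7b _ _ _))|]. exact (fe_veeC _ _).
Qed.
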